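(* Let $\mathfrak{g}_\alpha$, $-1\le\alpha\le1$, be the eight-dimensional real Lie algebras with basis $\{X_1,\dots,X_8\}$ and nonzero brackets $[X_1,X_2]=2X_2$, $[X_1,X_3]=-2X_3$, $[X_2,X_3]=X_1$, $[X_1,X_4]=X_4$, $[X_1,X_5]=-X_5$, $[X_1,X_6]=X_6$, $[X_1,X_7]=-X_7$, $[X_2,X_5]=X_4$, $[X_2,X_7]=X_6$, $[X_3,X_4]=X_5$, $[X_3,X_6]=X_7$, $[X_4,X_8]=X_4$, $[X_5,X_8]=X_5$, $[X_6,X_8]=\alpha X_6$, $[X_7,X_8]=\alpha X_7$, and let $b_2(\mathfrak{g})=\dim H^2(\mathfrak{g},\mathbb{R})$. Then: (i) for $\alpha\ne-1,0$, the (linear) deformations $\mathfrak{g}_{-1}\to\mathfrak{g}_\alpha$ decrease $b_2$ by one, i.e. $b_2(\mathfrak{g}_\alpha)=b_2(\mathfrak{g}_{-1})-1$; (ii) for $\alpha\ne-1,0$ and $\beta\in\{0,-1\}$, the (linear) deformations $\mathfrak{g}_\alpha\to\mathfrak{g}_\beta$ increase $b_2$ by one, i.e. $b_2(\mathfrak{g}_\beta)=b_2(\mathfrak{g}_\alpha)+1$; (iii) the (linear) deformation $\mathfrak{g}_{-1}\to\mathfrak{g}_0$ preserves $b_2$, i.e. $b_2(\mathfrak{g}_0)=b_2(\mathfrak{g}_{-1})$.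
   Context: $H^2(\mathfrak{g},\mathbb{R})$ denotes the second Lie algebra cohomology of $\mathfrak{g}$ with coefficients in the trivial module $\mathbb{R}$. A linear deformation $\mathfrak{g}\to\mathfrak{h}$ means that $\mathfrak{h}$ is isomorphic to a Lie algebra with bracket $[X,Y]+t\varphi(X,Y)$ on the underlying space of $\mathfrak{g}$, for a scalar $t$ and an integrable 2-cocycle $\varphi$ of $\mathfrak{g}$ with values in the adjoint module; for this family, $\mathfrak{g}_\alpha+\varepsilon\varphi$ with $\varphi(X_6,X_8)=X_6$, $\varphi(X_7,X_8)=X_7$ yields $\mathfrak{g}_{\alpha+\varepsilon}$. *)

(* Defs.v *)
(* Lie algebra g_alpha on R^8 (row vectors 'rV[R]_8),
   basis X_1..X_8 = standard unit vectors (index k-1). *)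
From HB Require Import structures.
From mathcomp Require Import all_boot all_order all_algebra.
From mathcomp Require Import reals.
Set Implicit Arguments. Unset Strict Implicit. Unset Printing Implicit Defensive.
Import Order.TTheory GRing.Theory Num.Theory.
Local Open Scope ring_scope.

Section LieAlg.
Variable R : fieldType.

Definition Xb (k : nat) : 'rV[R]_8 := delta_mx 0 (inord k.-1).

Definition br_up (a : R) (i j : nat) : 'rV[R]_8 :=
  match i, j with
  | 1, 2 => 2 *: Xb 2
  | 1, 3 => - (2 *: Xb 3)
  | 2, 3 => Xb 1
  | 1, 4 => Xb 4
  | 1, 5 => - Xb 5
  | 1, 6 => Xb 6
  | 1, 7 => - Xb 7
  | 2, 5 => Xb 4
  | 2, 7 => Xb 6
  | 3, 4 => Xb 5
  | 3, 6 => Xb 7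
  | 4, 8 => Xb 4
  | 5, 8 => Xb 5
  | 6, 8 => a *: Xb 6
  | 7, 8 => a *: Xb 7
  | _, _ => 0
  end.

Definition br_basis (a : R) (i j : nat) : 'rV[R]_8 :=
  if (i < j)%N then br_up a i j
  else if (j < i)%N then - br_up a j i else 0.

Definition lie_br (a : R) (x y : 'rV[R]_8) : 'rV[R]_8 :=
  \sum_(i < 8) \sum_(j < 8) (x 0 i * y 0 j) *: br_basis a i.+1 j.+1.

Definition e (i : 'I_8) : 'rV[R]_8 := delta_mx 0 i.

(* 2-cochains: bilinear forms w(x,y) = x *m w *m y^T, w : 'M_8.
   d2 w (x,y,z) = - w([x,y],z) + w([x,z],y) - w([y,z],x)  (trivial coeffs) *)
Definition bform (w : 'M[R]_8) (x y : 'rV[R]_8) : R := (x *m w *m y^T) 0 0.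

Definition d2 (a : R) (w : 'M[R]_8) : {ffun 'I_8 -> 'M[R]_8} :=
  [ffun i => \matrix_(j, k)
     (- bform w (lie_br a (e i) (e j)) (e k)
      + bform w (lie_br a (e i) (e k)) (e j)
      - bform w (lie_br a (e j) (e k)) (e i))].

Definition cocycle_cond (a : R) (w : 'M[R]_8) :
  'M[R]_8 * {ffun 'I_8 -> 'M[R]_8} := (w + w^T, d2 a w).

(* 1-cochains f : 'rV_8 (linear forms v |-> (v *m f^T) 0 0);
   d1 f (x,y) = - f([x,y]) *)
Definition d1 (a : R) (f : 'rV[R]_8) : 'M[R]_8 :=
  \matrix_(i, j) (- (lie_br a (e i) (e j) *m f^T) 0 0).

Definition Z2 (a : R) : {vspace 'M[R]_8} := lker (linfun (cocycle_cond a)).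
Definition B2 (a : R) : {vspace 'M[R]_8} := limg (linfun (d1 a)).

(* b_2(g_a) = dim H^2(g_a, R) = dim (Z^2 / B^2) *)
Definition b2 (a : R) : nat := (\dim (Z2 a) - \dim (Z2 a :&: B2 a))%N.

End LieAlg.

(* Main.v *)
Require Import Defs.
From HB Require Import structures.
From mathcomp Require Import all_boot all_order all_algebra.
From mathcomp Require Import reals.
From mathcomp Require Import ring lra.
Set Implicit Arguments. Unset Strict Implicit. Unset Printing Implicit Defensive.
Import Order.TTheory GRing.Theory Num.Theory.
Local Open Scope ring_scope.


Section S.
Variable R : realType.
Implicit Types (a : R) (w u v : 'M[R]_8) (x y : 'rV[R]_8).

Lemma sum8 (F : 'I_8 -> R) : \sum_(m < 8) F m =
  F (inord 0) + F (inord 1) + F (inord 2) + F (inord 3) + F (inord 4)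
  + F (inord 5) + F (inord 6) + F (inord 7).
Proof.
rewrite !big_ord_recr big_ord0 /=; rewrite {1}[0 + _]add0r.
by repeat congr (_ + _); congr F; apply/val_inj; rewrite /= inordK.
Qed.

Lemma lie_brE a (i j : 'I_8) : lie_br a (e R i) (e R j) = br_basis a i.+1 j.+1.
Proof.
rewrite /lie_br (bigD1 i) //= [X in _ + X]big1 ?addr0 => [|k ki]; last first.
  by apply: big1 => l _; rewrite /e !mxE eqxx (negbTE ki) /= mul0r scale0r.
rewrite (bigD1 j) //= [X in _ + X]big1 ?addr0 => [|k kj].
  by rewrite /e !mxE !eqxx /= mulr1 scale1r.
by rewrite /e !mxE !eqxx (negbTE kj) /= mulr0 scale0r.
Qed.

Lemma bformE w x (k : 'I_8) : bform w x (e R k) = \sum_(m < 8) x 0 m * w m k.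
Proof.
by rewrite /bform /e trmx_delta -colE !mxE.
Qed.

Lemma XbE n : (n.-1 < 8)%N -> Xb R n = \row_(m < 8) (if n.-1 == m :> nat then 1 else 0).
Proof.
move=> h; apply/rowP => m; rewrite /Xb !mxE /= -val_eqE /= inordK // eq_sym.
by case: (_ == _ :> nat).
Qed.
Definition bu a (p q : nat) : option (nat * R) :=
  match p, q with
  | 1, 2 => Some (2, 2) | 1, 3 => Some (3, -2) | 2, 3 => Some (1, 1)
  | 1, 4 => Some (4, 1) | 1, 5 => Some (5, -1) | 1, 6 => Some (6, 1)
  | 1, 7 => Some (7, -1) | 2, 5 => Some (4, 1) | 2, 7 => Some (6, 1)
  | 3, 4 => Some (5, 1) | 3, 6 => Some (7, 1) | 4, 8 => Some (4, 1)
  | 5, 8 => Some (5, 1) | 6, 8 => Some (6, a) | 7, 8 => Some (7, a)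
  | _, _ => None end.

Definition bc a p q m : R :=
  if (p < q)%N then
    (if bu a p q is Some (n, c) then (if (n.-1 == m)%N then c else 0) else 0)
  else if (q < p)%N then
    (if bu a q p is Some (n, c) then (if (n.-1 == m)%N then - c else 0) else 0)
  else 0.

Lemma bu_basis a p q m : (0 < p)%N -> (p <= 8)%N -> (0 < q)%N -> (q <= 8)%N -> (m < 8)%N ->
  (br_up a p q) 0 (inord m) = if bu a p q is Some (n, c) then (if (n.-1 == m)%N then c else 0) else 0.
Proof.
move=> p0 p8 q0 q8 hm.
case: p p0 p8 => [|[|[|[|[|[|[|[|[|p]]]]]]]]] // _ _;
case: q q0 q8 => [|[|[|[|[|[|[|[|[|q]]]]]]]]] // _ _ /=; rewrite /Xb ?mxE //;
rewrite -?val_eqE /= ?inordK // eq_sym; case: (_ == _ :> nat) => /=;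
rewrite ?mulr1 ?mulr0 ?oppr0 //.
Qed.
Lemma brE a p q m : (0 < p)%N -> (p <= 8)%N -> (0 < q)%N -> (q <= 8)%N -> (m < 8)%N ->
  (br_basis a p q) 0 (inord m) = bc a p q m.
Proof.
move=> p0 p8 q0 q8 hm; rewrite /br_basis /bc.
case: ltnP => pq; first exact: bu_basis.
case: ltnP => qp; last by rewrite mxE.
rewrite mxE bu_basis //; case: (bu a q p) => [[n c]|]; last by rewrite oppr0.
by case: (_ == _); rewrite ?oppr0.
Qed.

Definition T a w (i j k : nat) :=
  \sum_(m < 8) (br_basis a i.+1 j.+1) 0 m * w m (inord k).

Lemma d2E a w i j k : (i < 8)%N -> (j < 8)%N -> (k < 8)%N ->
  d2 a w (inord i) (inord j) (inord k) = - T a w i j k + T a w i k j - T a w j k i.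
Proof. by move=> hi hj hk; rewrite ffunE mxE !lie_brE !bformE !inordK. Qed.

Lemma TE a w i j k : (i < 8)%N -> (j < 8)%N ->
  T a w i j k = bc a i.+1 j.+1 0 * w (inord 0) (inord k) + bc a i.+1 j.+1 1 * w (inord 1) (inord k) + bc a i.+1 j.+1 2 * w (inord 2) (inord k) + bc a i.+1 j.+1 3 * w (inord 3) (inord k) + bc a i.+1 j.+1 4 * w (inord 4) (inord k) + bc a i.+1 j.+1 5 * w (inord 5) (inord k) + bc a i.+1 j.+1 6 * w (inord 6) (inord k) + bc a i.+1 j.+1 7 * w (inord 7) (inord k).
Proof. by move=> hi hj; rewrite /T sum8 !brE. Qed.

Lemma TW a (W : nat -> nat -> R) i j k : (i < 8)%N -> (j < 8)%N -> (k < 8)%N ->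
  T a (\matrix_(p, q) W p q) i j k = bc a i.+1 j.+1 0 * W 0 k + bc a i.+1 j.+1 1 * W 1 k + bc a i.+1 j.+1 2 * W 2 k + bc a i.+1 j.+1 3 * W 3 k + bc a i.+1 j.+1 4 * W 4 k + bc a i.+1 j.+1 5 * W 5 k + bc a i.+1 j.+1 6 * W 6 k + bc a i.+1 j.+1 7 * W 7 k.
Proof. by move=> hi hj hk; rewrite /T sum8 !brE // !mxE !inordK. Qed.

Lemma br_skew a p q : br_basis a q p = - br_basis a p q.
Proof.
by rewrite /br_basis; case: (ltngtP p q) => h; rewrite ?opprK ?oppr0.
Qed.

Lemma bformN w x y : bform w (- x) y = - bform w x y.
Proof. by rewrite /bform !mulNmx mxE. Qed.

Definition D a w i j k := d2 a w (inord i) (inord j) (inord k).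

Lemma D_swap12 a w i j k : (i < 8)%N -> (j < 8)%N -> (k < 8)%N -> D a w j i k = - D a w i j k.
Proof.
move=> hi hj hk; rewrite /D !ffunE !mxE !lie_brE !inordK // (br_skew a i.+1 j.+1) bformN.
set x := bform _ _ _; set y := bform _ _ _; set z := bform _ _ _; ring.
Qed.

Lemma D_swap23 a w i j k : (i < 8)%N -> (j < 8)%N -> (k < 8)%N -> D a w i k j = - D a w i j k.
Proof.
move=> hi hj hk; rewrite /D !ffunE !mxE !lie_brE !inordK // (br_skew a j.+1 k.+1) bformN.
set x := bform _ _ _; set y := bform _ _ _; set z := bform _ _ _; ring.
Qed.

Lemma D_sorted a w : (forall i j k, (i < j)%N -> (j < k)%N -> (k < 8)%N -> D a w i j k = 0) ->
  forall i j k, (i < 8)%N -> (j < 8)%N -> (k < 8)%N -> D a w i j k = 0.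
Proof.
move=> H.
have P2 : forall i j k, (i < 8)%N -> (j < 8)%N -> (k < 8)%N -> (i < j)%N -> D a w i j k = 0.
  move=> i j k hi hj hk hij; case: (ltngtP j k) => hjk.
  - exact: H.
  - have s1 := D_swap23 a w hi hj hk; case: (ltngtP i k) => hik.
    + have := H _ _ _ hik hjk hj; lra.
    + have s2 := D_swap12 a w hk hi hj; have := H _ _ _ hik hij hj; lra.
    + move: s1; rewrite hik => s1; have s2 := D_swap12 a w hk hk hj; lra.
  - move: hjk hk => <- hk; have := D_swap23 a w hi hj hj; lra.
move=> i j k hi hj hk; case: (ltngtP i j) => hij.
- exact: P2.
- have := D_swap12 a w hj hi hk; have := P2 _ _ _ hj hi hk hij; lra.
- move: hij hj => <- hj; have := D_swap12 a w hi hi hk; lra.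
Qed.


Lemma bform_sum w x y : bform w x y = \sum_(l < 8) (\sum_(m < 8) x 0 m * w m l) * y 0 l.
Proof. by rewrite /bform !mxE; apply: eq_bigr => l _; rewrite !mxE. Qed.

Lemma bform_lin (k : R) u v x y : bform (k *: u + v) x y = k * bform u x y + bform v x y.
Proof.
rewrite !bform_sum mulr_sumr -big_split /=; apply: eq_bigr => l _.
rewrite !big_distrl /= mulr_sumr -big_split /=; apply: eq_bigr => m _; rewrite !mxE; ring.
Qed.

Lemma d2_lin a : linear (d2 a).
Proof.
move=> k u v; apply/ffunP => i; rewrite !ffunE; apply/matrixP => j l; rewrite !mxE !bform_lin; ring.
Qed.

Lemma cc_lin a : linear (cocycle_cond a).
Proof.
move=> k u v; rewrite /cocycle_cond /= d2_lin; congr (_, _).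
by apply/matrixP => i j; rewrite !mxE; ring.
Qed.

Lemma d1_lin a : linear (d1 a).
Proof.
move=> k u v; apply/matrixP => i j; rewrite !mxE.
rewrite mulrN -opprD; congr (- _); rewrite mulr_sumr -big_split; apply: eq_bigr => m _.
by rewrite !mxE mulrDr mulrCA.
Qed.

Section Inst.
Variable a : R.
HB.instance Definition _ := GRing.isLinear.Build R 'M[R]_8 ('M[R]_8 * {ffun 'I_8 -> 'M[R]_8})%type *:%R (cocycle_cond a) (@cc_lin a).
HB.instance Definition _ := GRing.isLinear.Build R 'rV[R]_8 'M[R]_8 *:%R (d1 a) (@d1_lin a).
End Inst.

Lemma memZ a w : (w \in Z2 a) = (cocycle_cond a w == 0).
Proof. by rewrite /Z2 memv_ker lfunE. Qed.

Lemma memB a w : reflect (exists f, w = d1 a f) (w \in B2 a).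
Proof.
apply: (iffP memv_imgP) => [[f _ ->]|[f ->]]; exists f; rewrite ?lfunE ?memvf //.
Qed.

Lemma d1E a (F : nat -> R) i j : (i < 8)%N -> (j < 8)%N ->
  d1 a (\row_m F m) (inord i) (inord j) = - (bc a i.+1 j.+1 0 * F 0 + bc a i.+1 j.+1 1 * F 1 + bc a i.+1 j.+1 2 * F 2 + bc a i.+1 j.+1 3 * F 3 + bc a i.+1 j.+1 4 * F 4 + bc a i.+1 j.+1 5 * F 5 + bc a i.+1 j.+1 6 * F 6 + bc a i.+1 j.+1 7 * F 7).
Proof.
move=> hi hj; rewrite mxE lie_brE !inordK // mxE sum8; congr (- _).
by rewrite !mxE !brE // !inordK.
Qed.

Lemma subE (A B : 'M[R]_8) i j : (A - B) i j = A i j - B i j.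
Proof. by rewrite !mxE. Qed.

End S.


Section SZ.
Variable R : realType.
Implicit Types (a : R) (w u v : 'M[R]_8).

Definition Fw w (n : nat) : R :=
  match n with
  | 0 => - w (inord 1) (inord 2) | 1 => - w (inord 0) (inord 1) / 2
  | 2 => w (inord 0) (inord 2) / 2 | 3 => - w (inord 0) (inord 3)
  | 4 => w (inord 0) (inord 4) | 5 => - w (inord 0) (inord 5)
  | 6 => w (inord 0) (inord 6) | _ => 0 end.
Definition fw w : 'rV[R]_8 := \row_m Fw w m.
Definition spc (p q : nat) : bool :=
  [|| (p == 3) && (q == 6), (p == 6) && (q == 3), (p == 4) && (q == 5),
      (p == 5) && (q == 4), (p == 5) && (q == 6) | (p == 6) && (q == 5)]%N.

Lemma Zres a w : w \in Z2 a ->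
  (forall p q, (p < 8)%N -> (q < 8)%N ->
     (w - d1 a (fw w)) (inord p) (inord q) = if spc p q then w (inord p) (inord q) else 0)
  /\ w (inord 3) (inord 6) + w (inord 4) (inord 5) = 0
  /\ (1 + a) * w (inord 3) (inord 6) = 0
  /\ (1 + a) * w (inord 4) (inord 5) = 0
  /\ a * w (inord 5) (inord 6) = 0
  /\ (forall p q, (p < 8)%N -> (q < 8)%N -> w (inord q) (inord p) = - w (inord p) (inord q)).
Proof.
rewrite memZ => /eqP [h1 h2].
have sk : forall p q, (p < 8)%N -> (q < 8)%N -> w (inord q) (inord p) = - w (inord p) (inord q).
  move=> p q hp hq; have := congr1 (fun M : 'M[R]_8 => M (inord p) (inord q)) h1; rewrite !mxE => h; lra.
have hD : forall i j k, (i < 8)%N -> (j < 8)%N -> (k < 8)%N -> D a w i j k = 0.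
  by move=> i j k _ _ _; rewrite /D h2 ffunE mxE.
have e238 : - (1) * w (inord 0) (inord 7) = 0.
  have h := hD 1%N 2%N 7%N isT isT isT; rewrite /D d2E // !TE // /bc /= in h; clear -h ; lra.
have e124 : - (2) * w (inord 1) (inord 3) + (1) * (- w (inord 1) (inord 3)) = 0.
  have h := hD 0%N 1%N 3%N isT isT isT; rewrite /D d2E // !TE // /bc /= in h; rewrite (sk 1%N 3%N isT isT) in h; clear -h ; lra.
have e126 : - (2) * w (inord 1) (inord 5) + (1) * (- w (inord 1) (inord 5)) = 0.
  have h := hD 0%N 1%N 5%N isT isT isT; rewrite /D d2E // !TE // /bc /= in h; rewrite (sk 1%N 5%N isT isT) in h; clear -h ; lra.
have e128 : - (2) * w (inord 1) (inord 7) = 0.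
  have h := hD 0%N 1%N 7%N isT isT isT; rewrite /D d2E // !TE // /bc /= in h; clear -h ; lra.
have e135 : - (-2) * w (inord 2) (inord 4) + (-1) * (- w (inord 2) (inord 4)) = 0.
  have h := hD 0%N 2%N 4%N isT isT isT; rewrite /D d2E // !TE // /bc /= in h; rewrite (sk 2%N 4%N isT isT) in h; clear -h ; lra.
have e137 : - (-2) * w (inord 2) (inord 6) + (-1) * (- w (inord 2) (inord 6)) = 0.
  have h := hD 0%N 2%N 6%N isT isT isT; rewrite /D d2E // !TE // /bc /= in h; rewrite (sk 2%N 6%N isT isT) in h; clear -h ; lra.
have e138 : - (-2) * w (inord 2) (inord 7) = 0.
  have h := hD 0%N 2%N 7%N isT isT isT; rewrite /D d2E // !TE // /bc /= in h; clear -h ; lra.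
have e146 : - (1) * w (inord 3) (inord 5) + (1) * (- w (inord 3) (inord 5)) = 0.
  have h := hD 0%N 3%N 5%N isT isT isT; rewrite /D d2E // !TE // /bc /= in h; rewrite (sk 3%N 5%N isT isT) in h; clear -h ; lra.
have e157 : - (-1) * w (inord 4) (inord 6) + (-1) * (- w (inord 4) (inord 6)) = 0.
  have h := hD 0%N 4%N 6%N isT isT isT; rewrite /D d2E // !TE // /bc /= in h; rewrite (sk 4%N 6%N isT isT) in h; clear -h ; lra.
have e458 : (1) * w (inord 3) (inord 4) - (1) * (- w (inord 3) (inord 4)) = 0.
  have h := hD 3%N 4%N 7%N isT isT isT; rewrite /D d2E // !TE // /bc /= in h; rewrite (sk 3%N 4%N isT isT) in h; clear -h ; lra.
have e125 : - (2) * w (inord 1) (inord 4) + (-1) * (- w (inord 1) (inord 4)) - (1) * (- w (inord 0) (inord 3)) = 0.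
  have h := hD 0%N 1%N 4%N isT isT isT; rewrite /D d2E // !TE // /bc /= in h; rewrite (sk 0%N 3%N isT isT) in h; rewrite (sk 1%N 4%N isT isT) in h; clear -h ; lra.
have e127 : - (2) * w (inord 1) (inord 6) + (-1) * (- w (inord 1) (inord 6)) - (1) * (- w (inord 0) (inord 5)) = 0.
  have h := hD 0%N 1%N 6%N isT isT isT; rewrite /D d2E // !TE // /bc /= in h; rewrite (sk 0%N 5%N isT isT) in h; rewrite (sk 1%N 6%N isT isT) in h; clear -h ; lra.
have e134 : - (-2) * w (inord 2) (inord 3) + (1) * (- w (inord 2) (inord 3)) - (1) * (- w (inord 0) (inord 4)) = 0.
  have h := hD 0%N 2%N 3%N isT isT isT; rewrite /D d2E // !TE // /bc /= in h; rewrite (sk 0%N 4%N isT isT) in h; rewrite (sk 2%N 3%N isT isT) in h; clear -h ; lra.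
have e136 : - (-2) * w (inord 2) (inord 5) + (1) * (- w (inord 2) (inord 5)) - (1) * (- w (inord 0) (inord 6)) = 0.
  have h := hD 0%N 2%N 5%N isT isT isT; rewrite /D d2E // !TE // /bc /= in h; rewrite (sk 0%N 6%N isT isT) in h; rewrite (sk 2%N 5%N isT isT) in h; clear -h ; lra.
have e148 : - (1) * w (inord 3) (inord 7) - (1) * (- w (inord 0) (inord 3)) = 0.
  have h := hD 0%N 3%N 7%N isT isT isT; rewrite /D d2E // !TE // /bc /= in h; rewrite (sk 0%N 3%N isT isT) in h; clear -h ; lra.
have e158 : - (-1) * w (inord 4) (inord 7) - (1) * (- w (inord 0) (inord 4)) = 0.
  have h := hD 0%N 4%N 7%N isT isT isT; rewrite /D d2E // !TE // /bc /= in h; rewrite (sk 0%N 4%N isT isT) in h; clear -h ; lra.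
have e168 : - (1) * w (inord 5) (inord 7) - (a) * (- w (inord 0) (inord 5)) = 0.
  have h := hD 0%N 5%N 7%N isT isT isT; rewrite /D d2E // !TE // /bc /= in h; rewrite (sk 0%N 5%N isT isT) in h; clear -h ; lra.
have e178 : - (-1) * w (inord 6) (inord 7) - (a) * (- w (inord 0) (inord 6)) = 0.
  have h := hD 0%N 6%N 7%N isT isT isT; rewrite /D d2E // !TE // /bc /= in h; rewrite (sk 0%N 6%N isT isT) in h; clear -h ; lra.
have e257 : - (1) * w (inord 3) (inord 6) + (1) * (- w (inord 4) (inord 5)) = 0.
  have h := hD 1%N 4%N 6%N isT isT isT; rewrite /D d2E // !TE // /bc /= in h; rewrite (sk 4%N 5%N isT isT) in h; clear -h ; lra.
have e478 : (1) * w (inord 3) (inord 6) - (a) * (- w (inord 3) (inord 6)) = 0.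
  have h := hD 3%N 6%N 7%N isT isT isT; rewrite /D d2E // !TE // /bc /= in h; rewrite (sk 3%N 6%N isT isT) in h; clear -h ; lra.
have e568 : (1) * w (inord 4) (inord 5) - (a) * (- w (inord 4) (inord 5)) = 0.
  have h := hD 4%N 5%N 7%N isT isT isT; rewrite /D d2E // !TE // /bc /= in h; rewrite (sk 4%N 5%N isT isT) in h; clear -h ; lra.
have e678 : (a) * w (inord 5) (inord 6) - (a) * (- w (inord 5) (inord 6)) = 0.
  have h := hD 5%N 6%N 7%N isT isT isT; rewrite /D d2E // !TE // /bc /= in h; rewrite (sk 5%N 6%N isT isT) in h; clear -h ; lra.
have r00 : (w - d1 a (fw w)) (inord 0) (inord 0) = 0.
  rewrite subE /fw d1E // /bc /Fw /=; have hs := sk 0%N 0%N isT isT; clear -hs ; lra.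
have r01 : (w - d1 a (fw w)) (inord 0) (inord 1) = 0.
  rewrite subE /fw d1E // /bc /Fw /=; have hs := sk 0%N 1%N isT isT; clear -hs ; lra.
have r02 : (w - d1 a (fw w)) (inord 0) (inord 2) = 0.
  rewrite subE /fw d1E // /bc /Fw /=; have hs := sk 0%N 2%N isT isT; clear -hs ; lra.
have r03 : (w - d1 a (fw w)) (inord 0) (inord 3) = 0.
  rewrite subE /fw d1E // /bc /Fw /=; have hs := sk 0%N 3%N isT isT; clear -hs ; lra.
have r04 : (w - d1 a (fw w)) (inord 0) (inord 4) = 0.
  rewrite subE /fw d1E // /bc /Fw /=; have hs := sk 0%N 4%N isT isT; clear -hs ; lra.
have r05 : (w - d1 a (fw w)) (inord 0) (inord 5) = 0.
  rewrite subE /fw d1E // /bc /Fw /=; have hs := sk 0%N 5%N isT isT; clear -hs ; lra.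
have r06 : (w - d1 a (fw w)) (inord 0) (inord 6) = 0.
  rewrite subE /fw d1E // /bc /Fw /=; have hs := sk 0%N 6%N isT isT; clear -hs ; lra.
have r07 : (w - d1 a (fw w)) (inord 0) (inord 7) = 0.
  rewrite subE /fw d1E // /bc /Fw /=; have hs := sk 0%N 7%N isT isT; clear -hs e238; lra.
have r10 : (w - d1 a (fw w)) (inord 1) (inord 0) = 0.
  rewrite subE /fw d1E // /bc /Fw /=; have hs := sk 0%N 1%N isT isT; clear -hs ; lra.
have r11 : (w - d1 a (fw w)) (inord 1) (inord 1) = 0.
  rewrite subE /fw d1E // /bc /Fw /=; have hs := sk 1%N 1%N isT isT; clear -hs ; lra.
have r12 : (w - d1 a (fw w)) (inord 1) (inord 2) = 0.
  rewrite subE /fw d1E // /bc /Fw /=; have hs := sk 1%N 2%N isT isT; clear -hs ; lra.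
have r13 : (w - d1 a (fw w)) (inord 1) (inord 3) = 0.
  rewrite subE /fw d1E // /bc /Fw /=; have hs := sk 1%N 3%N isT isT; clear -hs e124; lra.
have r14 : (w - d1 a (fw w)) (inord 1) (inord 4) = 0.
  rewrite subE /fw d1E // /bc /Fw /=; have hs := sk 1%N 4%N isT isT; clear -hs e125; lra.
have r15 : (w - d1 a (fw w)) (inord 1) (inord 5) = 0.
  rewrite subE /fw d1E // /bc /Fw /=; have hs := sk 1%N 5%N isT isT; clear -hs e126; lra.
have r16 : (w - d1 a (fw w)) (inord 1) (inord 6) = 0.
  rewrite subE /fw d1E // /bc /Fw /=; have hs := sk 1%N 6%N isT isT; clear -hs e127; lra.
have r17 : (w - d1 a (fw w)) (inord 1) (inord 7) = 0.
  rewrite subE /fw d1E // /bc /Fw /=; have hs := sk 1%N 7%N isT isT; clear -hs e128; lra.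
have r20 : (w - d1 a (fw w)) (inord 2) (inord 0) = 0.
  rewrite subE /fw d1E // /bc /Fw /=; have hs := sk 0%N 2%N isT isT; clear -hs ; lra.
have r21 : (w - d1 a (fw w)) (inord 2) (inord 1) = 0.
  rewrite subE /fw d1E // /bc /Fw /=; have hs := sk 1%N 2%N isT isT; clear -hs ; lra.
have r22 : (w - d1 a (fw w)) (inord 2) (inord 2) = 0.
  rewrite subE /fw d1E // /bc /Fw /=; have hs := sk 2%N 2%N isT isT; clear -hs ; lra.
have r23 : (w - d1 a (fw w)) (inord 2) (inord 3) = 0.
  rewrite subE /fw d1E // /bc /Fw /=; have hs := sk 2%N 3%N isT isT; clear -hs e134; lra.
have r24 : (w - d1 a (fw w)) (inord 2) (inord 4) = 0.
  rewrite subE /fw d1E // /bc /Fw /=; have hs := sk 2%N 4%N isT isT; clear -hs e135; lra.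
have r25 : (w - d1 a (fw w)) (inord 2) (inord 5) = 0.
  rewrite subE /fw d1E // /bc /Fw /=; have hs := sk 2%N 5%N isT isT; clear -hs e136; lra.
have r26 : (w - d1 a (fw w)) (inord 2) (inord 6) = 0.
  rewrite subE /fw d1E // /bc /Fw /=; have hs := sk 2%N 6%N isT isT; clear -hs e137; lra.
have r27 : (w - d1 a (fw w)) (inord 2) (inord 7) = 0.
  rewrite subE /fw d1E // /bc /Fw /=; have hs := sk 2%N 7%N isT isT; clear -hs e138; lra.
have r30 : (w - d1 a (fw w)) (inord 3) (inord 0) = 0.
  rewrite subE /fw d1E // /bc /Fw /=; have hs := sk 0%N 3%N isT isT; clear -hs ; lra.
have r31 : (w - d1 a (fw w)) (inord 3) (inord 1) = 0.
  rewrite subE /fw d1E // /bc /Fw /=; have hs := sk 1%N 3%N isT isT; clear -hs e124; lra.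
have r32 : (w - d1 a (fw w)) (inord 3) (inord 2) = 0.
  rewrite subE /fw d1E // /bc /Fw /=; have hs := sk 2%N 3%N isT isT; clear -hs e134; lra.
have r33 : (w - d1 a (fw w)) (inord 3) (inord 3) = 0.
  rewrite subE /fw d1E // /bc /Fw /=; have hs := sk 3%N 3%N isT isT; clear -hs ; lra.
have r34 : (w - d1 a (fw w)) (inord 3) (inord 4) = 0.
  rewrite subE /fw d1E // /bc /Fw /=; have hs := sk 3%N 4%N isT isT; clear -hs e458; lra.
have r35 : (w - d1 a (fw w)) (inord 3) (inord 5) = 0.
  rewrite subE /fw d1E // /bc /Fw /=; have hs := sk 3%N 5%N isT isT; clear -hs e146; lra.
have r36 : (w - d1 a (fw w)) (inord 3) (inord 6) = w (inord 3) (inord 6).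
  rewrite subE /fw d1E // /bc /Fw /=; have hs := sk 3%N 6%N isT isT; clear -hs ; lra.
have r37 : (w - d1 a (fw w)) (inord 3) (inord 7) = 0.
  rewrite subE /fw d1E // /bc /Fw /=; have hs := sk 3%N 7%N isT isT; clear -hs e148; lra.
have r40 : (w - d1 a (fw w)) (inord 4) (inord 0) = 0.
  rewrite subE /fw d1E // /bc /Fw /=; have hs := sk 0%N 4%N isT isT; clear -hs ; lra.
have r41 : (w - d1 a (fw w)) (inord 4) (inord 1) = 0.
  rewrite subE /fw d1E // /bc /Fw /=; have hs := sk 1%N 4%N isT isT; clear -hs e125; lra.
have r42 : (w - d1 a (fw w)) (inord 4) (inord 2) = 0.
  rewrite subE /fw d1E // /bc /Fw /=; have hs := sk 2%N 4%N isT isT; clear -hs e135; lra.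
have r43 : (w - d1 a (fw w)) (inord 4) (inord 3) = 0.
  rewrite subE /fw d1E // /bc /Fw /=; have hs := sk 3%N 4%N isT isT; clear -hs e458; lra.
have r44 : (w - d1 a (fw w)) (inord 4) (inord 4) = 0.
  rewrite subE /fw d1E // /bc /Fw /=; have hs := sk 4%N 4%N isT isT; clear -hs ; lra.
have r45 : (w - d1 a (fw w)) (inord 4) (inord 5) = w (inord 4) (inord 5).
  rewrite subE /fw d1E // /bc /Fw /=; have hs := sk 4%N 5%N isT isT; clear -hs ; lra.
have r46 : (w - d1 a (fw w)) (inord 4) (inord 6) = 0.
  rewrite subE /fw d1E // /bc /Fw /=; have hs := sk 4%N 6%N isT isT; clear -hs e157; lra.
have r47 : (w - d1 a (fw w)) (inord 4) (inord 7) = 0.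
  rewrite subE /fw d1E // /bc /Fw /=; have hs := sk 4%N 7%N isT isT; clear -hs e158; lra.
have r50 : (w - d1 a (fw w)) (inord 5) (inord 0) = 0.
  rewrite subE /fw d1E // /bc /Fw /=; have hs := sk 0%N 5%N isT isT; clear -hs ; lra.
have r51 : (w - d1 a (fw w)) (inord 5) (inord 1) = 0.
  rewrite subE /fw d1E // /bc /Fw /=; have hs := sk 1%N 5%N isT isT; clear -hs e126; lra.
have r52 : (w - d1 a (fw w)) (inord 5) (inord 2) = 0.
  rewrite subE /fw d1E // /bc /Fw /=; have hs := sk 2%N 5%N isT isT; clear -hs e136; lra.
have r53 : (w - d1 a (fw w)) (inord 5) (inord 3) = 0.
  rewrite subE /fw d1E // /bc /Fw /=; have hs := sk 3%N 5%N isT isT; clear -hs e146; lra.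
have r54 : (w - d1 a (fw w)) (inord 5) (inord 4) = w (inord 5) (inord 4).
  rewrite subE /fw d1E // /bc /Fw /=; have hs := sk 4%N 5%N isT isT; clear -hs ; lra.
have r55 : (w - d1 a (fw w)) (inord 5) (inord 5) = 0.
  rewrite subE /fw d1E // /bc /Fw /=; have hs := sk 5%N 5%N isT isT; clear -hs ; lra.
have r56 : (w - d1 a (fw w)) (inord 5) (inord 6) = w (inord 5) (inord 6).
  rewrite subE /fw d1E // /bc /Fw /=; have hs := sk 5%N 6%N isT isT; clear -hs ; lra.
have r57 : (w - d1 a (fw w)) (inord 5) (inord 7) = 0.
  rewrite subE /fw d1E // /bc /Fw /=; have hs := sk 5%N 7%N isT isT; clear -hs e168; lra.
have r60 : (w - d1 a (fw w)) (inord 6) (inord 0) = 0.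
  rewrite subE /fw d1E // /bc /Fw /=; have hs := sk 0%N 6%N isT isT; clear -hs ; lra.
have r61 : (w - d1 a (fw w)) (inord 6) (inord 1) = 0.
  rewrite subE /fw d1E // /bc /Fw /=; have hs := sk 1%N 6%N isT isT; clear -hs e127; lra.
have r62 : (w - d1 a (fw w)) (inord 6) (inord 2) = 0.
  rewrite subE /fw d1E // /bc /Fw /=; have hs := sk 2%N 6%N isT isT; clear -hs e137; lra.
have r63 : (w - d1 a (fw w)) (inord 6) (inord 3) = w (inord 6) (inord 3).
  rewrite subE /fw d1E // /bc /Fw /=; have hs := sk 3%N 6%N isT isT; clear -hs ; lra.
have r64 : (w - d1 a (fw w)) (inord 6) (inord 4) = 0.
  rewrite subE /fw d1E // /bc /Fw /=; have hs := sk 4%N 6%N isT isT; clear -hs e157; lra.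
have r65 : (w - d1 a (fw w)) (inord 6) (inord 5) = w (inord 6) (inord 5).
  rewrite subE /fw d1E // /bc /Fw /=; have hs := sk 5%N 6%N isT isT; clear -hs ; lra.
have r66 : (w - d1 a (fw w)) (inord 6) (inord 6) = 0.
  rewrite subE /fw d1E // /bc /Fw /=; have hs := sk 6%N 6%N isT isT; clear -hs ; lra.
have r67 : (w - d1 a (fw w)) (inord 6) (inord 7) = 0.
  rewrite subE /fw d1E // /bc /Fw /=; have hs := sk 6%N 7%N isT isT; clear -hs e178; lra.
have r70 : (w - d1 a (fw w)) (inord 7) (inord 0) = 0.
  rewrite subE /fw d1E // /bc /Fw /=; have hs := sk 0%N 7%N isT isT; clear -hs e238; lra.
have r71 : (w - d1 a (fw w)) (inord 7) (inord 1) = 0.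
  rewrite subE /fw d1E // /bc /Fw /=; have hs := sk 1%N 7%N isT isT; clear -hs e128; lra.
have r72 : (w - d1 a (fw w)) (inord 7) (inord 2) = 0.
  rewrite subE /fw d1E // /bc /Fw /=; have hs := sk 2%N 7%N isT isT; clear -hs e138; lra.
have r73 : (w - d1 a (fw w)) (inord 7) (inord 3) = 0.
  rewrite subE /fw d1E // /bc /Fw /=; have hs := sk 3%N 7%N isT isT; clear -hs e148; lra.
have r74 : (w - d1 a (fw w)) (inord 7) (inord 4) = 0.
  rewrite subE /fw d1E // /bc /Fw /=; have hs := sk 4%N 7%N isT isT; clear -hs e158; lra.
have r75 : (w - d1 a (fw w)) (inord 7) (inord 5) = 0.
  rewrite subE /fw d1E // /bc /Fw /=; have hs := sk 5%N 7%N isT isT; clear -hs e168; lra.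
have r76 : (w - d1 a (fw w)) (inord 7) (inord 6) = 0.
  rewrite subE /fw d1E // /bc /Fw /=; have hs := sk 6%N 7%N isT isT; clear -hs e178; lra.
have r77 : (w - d1 a (fw w)) (inord 7) (inord 7) = 0.
  rewrite subE /fw d1E // /bc /Fw /=; have hs := sk 7%N 7%N isT isT; clear -hs ; lra.
split.
{ move=> p q; case: p => [|[|[|[|[|[|[|[|p]]]]]]]] //; case: q => [|[|[|[|[|[|[|[|q]]]]]]]] // _ _.
  all: first [ exact r00 | exact r01 | exact r02 | exact r03 | exact r04 | exact r05 | exact r06 | exact r07 | exact r10 | exact r11 | exact r12 | exact r13 | exact r14 | exact r15 | exact r16 | exact r17 | exact r20 | exact r21 | exact r22 | exact r23 | exact r24 | exact r25 | exact r26 | exact r27 | exact r30 | exact r31 | exact r32 | exact r33 | exact r34 | exact r35 | exact r36 | exact r37 | exact r40 | exact r41 | exact r42 | exact r43 | exact r44 | exact r45 | exact r46 | exact r47 | exact r50 | exact r51 | exact r52 | exact r53 | exact r54 | exact r55 | exact r56 | exact r57 | exact r60 | exact r61 | exact r62 | exact r63 | exact r64 | exact r65 | exact r66 | exact r67 | exact r70 | exact r71 | exact r72 | exact r73 | exact r74 | exact r75 | exact r76 | exact r77 ]. }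
split; first by clear -e257; lra.
split; first by clear -e478; lra.
split; first by clear -e568; lra.
split; first by clear -e678; lra.
exact: sk.
Qed.
End SZ.


Section S2.
Variable R : realType.
Implicit Types (a : R) (w u v : 'M[R]_8).

Lemma b2_zero a : (Z2 a <= B2 a)%VS -> b2 a = 0%N.
Proof. by rewrite /b2 => /capv_idPl ->; rewrite subnn. Qed.

Lemma b2_one a w0 (c : 'M[R]_8 -> R) : w0 \in Z2 a -> w0 \notin B2 a ->
  (forall w, w \in Z2 a -> w - c w *: w0 \in B2 a) -> b2 a = 1%N.
Proof.
move=> w0Z w0B H.
have eqZ : Z2 a = (Z2 a :&: B2 a + <[w0]>)%VS.
  apply/eqP; rewrite eqEsubv; apply/andP; split.
    apply/subvP => w wZ; rewrite -(subrK (c w *: w0) w); apply: memv_add.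
      by rewrite memv_cap H // andbT memvB // memvZ.
    by rewrite memvZ // memv_line.
  by rewrite subv_add capvSl -memvE.
have dis : (Z2 a :&: B2 a :&: <[w0]> = 0)%VS.
  apply/eqP; rewrite -subv0; apply/subvP => v; rewrite !memv_cap memv0.
  case/andP => /andP[_ vB] /vlineP[k vk].
  have [k0|k0] := eqVneq k 0; first by rewrite vk k0 scale0r.
  by case/negP: w0B; rewrite -(scalerK k0 w0) -vk memvZ.
have w00 : w0 != 0 by apply: contraNneq w0B => ->; rewrite mem0v.
by rewrite /b2 {1}eqZ dimv_disjoint_sum // dim_vline w00 addKn.
Qed.
Lemma memZ_W a (W : nat -> nat -> R) :
  (forall p q, (p < 8)%N -> (q < 8)%N -> W p q + W q p = 0) ->
  (forall i j k, (i < j)%N -> (j < k)%N -> (k < 8)%N -> D a (\matrix_(p, q) W p q) i j k = 0) ->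
  \matrix_(p, q) W p q \in Z2 a.
Proof.
move=> hs hD; rewrite memZ /cocycle_cond.
have -> : (\matrix_(p, q) W p q : 'M[R]_8) + (\matrix_(p, q) W p q : 'M[R]_8)^T = 0.
  by apply/matrixP => i j; rewrite !mxE; apply: hs.
have -> : d2 a (\matrix_(p, q) W p q : 'M[R]_8) = 0.
  apply/ffunP => i; apply/matrixP => j k; rewrite (_ : (0 : {ffun 'I_8 -> 'M[R]_8}) i j k = 0); last by rewrite ffunE mxE.
  rewrite -[i]inord_val -[j]inord_val -[k]inord_val.
  exact: (D_sorted hD).
by [].
Qed.

Definition W0m1 (p q : nat) : R :=
  match p, q with | 3, 6 => 1 | 6, 3 => -1 | 4, 5 => -1 | 5, 4 => 1 | _, _ => 0 end.

Lemma W0m1_Z : \matrix_(p, q) W0m1 p q \in Z2 (-1).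
Proof.
apply: memZ_W.
  move=> p q; case: p => [|[|[|[|[|[|[|[|p]]]]]]]] //; case: q => [|[|[|[|[|[|[|[|q]]]]]]]] // _ _ /=; lra.
move=> i j k; case: k => [|[|[|[|[|[|[|[|k]]]]]]]] //; case: j => [|[|[|[|[|[|[|[|j]]]]]]]] //;
  case: i => [|[|[|[|[|[|[|[|i]]]]]]]] // _ _ _.
all: rewrite /D d2E // !TW // /bc /=; lra.
Qed.
Definition W00 (p q : nat) : R :=
  match p, q with | 5, 6 => 1 | 6, 5 => -1 | _, _ => 0 end.

Lemma W00_Z : \matrix_(p, q) W00 p q \in Z2 (0).
Proof.
apply: memZ_W.
  move=> p q; case: p => [|[|[|[|[|[|[|[|p]]]]]]]] //; case: q => [|[|[|[|[|[|[|[|q]]]]]]]] // _ _ /=; lra.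
move=> i j k; case: k => [|[|[|[|[|[|[|[|k]]]]]]]] //; case: j => [|[|[|[|[|[|[|[|j]]]]]]]] //;
  case: i => [|[|[|[|[|[|[|[|i]]]]]]]] // _ _ _.
all: rewrite /D d2E // !TW // /bc /=; lra.
Qed.
Lemma W0m1_notB : \matrix_(p, q) W0m1 p q \notin B2 (-1).
Proof.
apply/negP => /memB [f hf].
have ef : f = \row_m f 0 (inord m) by apply/rowP => m; rewrite mxE inord_val.
have := d1E (-1 : R) (fun m => f 0 (inord m)) (isT : (3 < 8)%N) (isT : (6 < 8)%N).
rewrite -ef -hf mxE !inordK // /bc /= => h.
have : (1 : R) = 0 by lra.
by move/eqP; rewrite oner_eq0.
Qed.

Lemma b2_W0m1 : b2 (-1 : R) = 1%N.
Proof.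
apply: (b2_one (c := fun w => w (inord 3) (inord 6)) W0m1_Z W0m1_notB).
move=> w wZ; have [r [h1 [h2 [h3 [h4 sk]]]]] := Zres wZ.
have s36 := sk 3%N 6%N isT isT; have s45 := sk 4%N 5%N isT isT; have s56 := sk 5%N 6%N isT isT.
apply/memB; exists (fw w); set d := d1 _ (fw w).
apply/matrixP => i j; rewrite -[i]inord_val -[j]inord_val.
move: (nat_of_ord i) (ltn_ord i) (nat_of_ord j) (ltn_ord j) => p hp q hq.
have := r p q hp hq; rewrite !subE !mxE !inordK //; clear r sk wZ; move: hp hq.
case: p => [|[|[|[|[|[|[|[|p]]]]]]]] //; case: q => [|[|[|[|[|[|[|[|q]]]]]]]] // _ _; rewrite /spc /=.
all: move=> ?; lra.
Qed.
Lemma W00_notB : \matrix_(p, q) W00 p q \notin B2 (0).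
Proof.
apply/negP => /memB [f hf].
have ef : f = \row_m f 0 (inord m) by apply/rowP => m; rewrite mxE inord_val.
have := d1E (0 : R) (fun m => f 0 (inord m)) (isT : (5 < 8)%N) (isT : (6 < 8)%N).
rewrite -ef -hf mxE !inordK // /bc /= => h.
have : (1 : R) = 0 by lra.
by move/eqP; rewrite oner_eq0.
Qed.

Lemma b2_W00 : b2 (0 : R) = 1%N.
Proof.
apply: (b2_one (c := fun w => w (inord 5) (inord 6)) W00_Z W00_notB).
move=> w wZ; have [r [h1 [h2 [h3 [h4 sk]]]]] := Zres wZ.
have s36 := sk 3%N 6%N isT isT; have s45 := sk 4%N 5%N isT isT; have s56 := sk 5%N 6%N isT isT.
apply/memB; exists (fw w); set d := d1 _ (fw w).
apply/matrixP => i j; rewrite -[i]inord_val -[j]inord_val.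
move: (nat_of_ord i) (ltn_ord i) (nat_of_ord j) (ltn_ord j) => p hp q hq.
have := r p q hp hq; rewrite !subE !mxE !inordK //; clear r sk wZ; move: hp hq.
case: p => [|[|[|[|[|[|[|[|p]]]]]]]] //; case: q => [|[|[|[|[|[|[|[|q]]]]]]]] // _ _; rewrite /spc /=.
all: move=> ?; lra.
Qed.
Lemma b2_gen a : a != 0 -> a != -1 -> b2 a = 0%N.
Proof.
move=> a0 am1; apply: b2_zero; apply/subvP => w wZ.
have [r [h1 [h2 [h3 [h4 sk]]]]] := Zres wZ.
have a1 : 1 + a != 0 by rewrite addrC addr_eq0.
have z36 : w (inord 3) (inord 6) = 0 by move/eqP: h2; rewrite mulf_eq0 (negbTE a1) => /eqP.
have z45 : w (inord 4) (inord 5) = 0 by move/eqP: h3; rewrite mulf_eq0 (negbTE a1) => /eqP.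
have z56 : w (inord 5) (inord 6) = 0 by move/eqP: h4; rewrite mulf_eq0 (negbTE a0) => /eqP.
have s36 := sk 3%N 6%N isT isT; have s45 := sk 4%N 5%N isT isT; have s56 := sk 5%N 6%N isT isT.
apply/memB; exists (fw w); set d := d1 _ (fw w).
apply/matrixP => i j; rewrite -[i]inord_val -[j]inord_val.
move: (nat_of_ord i) (ltn_ord i) (nat_of_ord j) (ltn_ord j) => p hp q hq.
have := r p q hp hq; rewrite subE; clear r sk wZ h1 h2 h3 h4 a1 a0 am1; move: hp hq.
case: p => [|[|[|[|[|[|[|[|p]]]]]]]] //; case: q => [|[|[|[|[|[|[|[|q]]]]]]]] // _ _; rewrite /spc /=.
all: move=> ?; lra.
Qed.

End S2.

Unset Implicit Arguments.

Theorem proposition3 (R : realType) :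
  (forall alpha : R, -1 <= alpha <= 1 -> alpha != -1 -> alpha != 0 ->
     b2 (-1 : R) = (b2 alpha).+1) /\
  (forall alpha beta : R, -1 <= alpha <= 1 -> alpha != -1 -> alpha != 0 ->
     (beta == 0) || (beta == -1) -> b2 beta = (b2 alpha).+1) /\
  b2 (0 : R) = b2 (-1 : R).
Proof.
split; first by move=> al _ am1 a0; rewrite b2_W0m1 (b2_gen a0 am1).
split; last by rewrite b2_W0m1 b2_W00.
move=> al be _ am1 a0 /orP[/eqP ->|/eqP ->]; rewrite (b2_gen a0 am1).
  exact: b2_W00.
exact: b2_W0m1.
Qed.
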